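(* Fix a real number $m\ge1$. There is a positive constant $C$ (depending only on $m$ and $r$) such that for all $N\ge1$ and all $1\le k\le N$, $$E\big[X_{k,N}^m\big]\le\Big(\frac kN\Big)^{mr}\Big(1+\frac Ck\Big).$$
   Context: Fix $r\in(0,1)$. Multitype Yule process: at time $0$ a single individual of type $1$ is born; no deaths; each individual independently gives birth at rate $1$; a newborn has, independently, its parent's type with probability $1-r$ and otherwise a brand-new type. Individuals are numbered in order of birth (the initial one is the 1st); if the $k$-th individual born has a type different from its parent, that type is called type $k$. $T_N$ is the time the population reaches size $N$; $X_{k,N}$ is the fraction of individuals at time $T_N$ with type in $\{1,\dots,k\}$. *)

(* Defs.v *)
From mathcomp Require Import all_boot all_order all_algebra.
From mathcomp Require Import reals exp.
Set Implicit Arguments. Unset Strict Implicit. Unset Printing Implicit Defensive.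
Import Order.TTheory GRing.Theory Num.Theory.
Local Open Scope ring_scope.

(* Multitype Yule process observed at the successive birth times T_1, T_2, ...
   A configuration of a population of size n is the sequence s of length n
   whose j-th entry (0-based) is the type label of the (j+1)-th individual born.
   At time T_n each of the n individuals is equally likely to be the parent of
   the (n+1)-th individual (independent rate-1 exponential clocks); the newborn
   keeps the parent's type with probability 1-r, and otherwise gets the brand
   new type n+1.

   [yule_exp r n f] is the expectation of f(configuration at time T_(n+1)),
   i.e. when the population has size n+1. *)
Fixpoint yule_exp (R : realType) (r : R) (n : nat) (f : seq nat -> R) : R :=
  match n with
  | 0%N => f [:: 1%N]
  | n'.+1 =>
      yule_exp r n' (fun s =>
        \sum_(p < n'.+1)
          (n'.+1%:R)^-1 * ((1 - r) * f (rcons s (nth 0%N s p))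
                           + r * f (rcons s n'.+2)))
  end.

Definition frac_types (R : realType) (k : nat) (s : seq nat) : R :=
  (count (fun t => (t <= k)%N) s)%:R / (size s)%:R.

Definition EXm (R : realType) (r m : R) (k N : nat) : R :=
  yule_exp r N.-1 (fun s => powR (frac_types R k s) m).

(* Main.v *)
Require Import Defs.
From mathcomp Require Import all_boot all_order all_algebra.
From mathcomp Require Import reals exp.
From mathcomp Require Import boolp sequences.
From mathcomp Require Import ring lra zify.
Set Implicit Arguments. Unset Strict Implicit. Unset Printing Implicit Defensive.
Import Order.TTheory GRing.Theory Num.Theory.
Local Open Scope ring_scope.



Definition inv_cfg (n : nat) (s : seq nat) : bool :=
  (size s == n.+1) && all (fun t => (t <= n.+1)%N) s.

Definition Phi (R : realType) (r : R) (n : nat) (f : seq nat -> R) (s : seq nat) : R :=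
  \sum_(p < n.+1)
    (n.+1%:R)^-1 * ((1 - r) * f (rcons s (nth 0%N s p)) + r * f (rcons s n.+2)).

Definition cnt (k : nat) (s : seq nat) : nat := count (fun t => (t <= k)%N) s.

Lemma E_S (R : realType) (r : R) n f : yule_exp r n.+1 f = yule_exp r n (Phi r n f).
Proof. by []. Qed.

Lemma E_ext (R : realType) (r : R) n f g :
  (forall s, f s = g s) -> yule_exp r n f = yule_exp r n g.
Proof. by move=> H; rewrite (funext H). Qed.

Lemma inv_rcons n s x : inv_cfg n s -> (x <= n.+2)%N -> inv_cfg n.+1 (rcons s x).
Proof.
move=> /andP[/eqP Hs Ha] Hx; rewrite /inv_cfg size_rcons Hs eqxx /= all_rcons Hx /=.
by apply/allP => t /(allP Ha) Ht; apply: (leq_trans Ht).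
Qed.

Lemma E_mono (R : realType) (r : R) n (f g : seq nat -> R) : 0 <= r <= 1 ->
  (forall s, inv_cfg n s -> f s <= g s) -> yule_exp r n f <= yule_exp r n g.
Proof.
move=> /andP[r0 r1]; elim: n f g => [|n IH] f g H; first by apply: H.
rewrite !E_S; apply: IH => s Hs; rewrite /Phi; apply: ler_sum => p _.
have Hsz : size s = n.+1 by case/andP: Hs => /eqP.
apply: ler_wpM2l; first by rewrite invr_ge0 ler0n.
apply: lerD; (apply: ler_wpM2l; first by rewrite ?subr_ge0); apply: H;
  apply: inv_rcons => //.
case/andP: Hs => _ /allP Ha.
have : nth 0%N s p \in s by apply: mem_nth; rewrite Hsz.
by move/Ha => Ht; apply: (leq_trans Ht).
Qed.

Lemma E_ext_inv (R : realType) (r : R) n (f g : seq nat -> R) : 0 <= r <= 1 ->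
  (forall s, inv_cfg n s -> f s = g s) -> yule_exp r n f = yule_exp r n g.
Proof.
move=> hr H; apply/le_anti/andP; split; apply: E_mono => // s Hs; by rewrite H.
Qed.

Lemma E_scale (R : realType) (r : R) n (c : R) f :
  yule_exp r n (fun s => c * f s) = c * yule_exp r n f.
Proof.
elim: n f => [|n IH] f //; rewrite !E_S -IH; apply: E_ext => s.
rewrite /Phi mulr_sumr; apply: eq_bigr => p _; ring.
Qed.

Lemma E_const (R : realType) (r : R) n (c : R) : yule_exp r n (fun _ => c) = c.
Proof.
elim: n => [|n IH] //; rewrite E_S -[RHS]IH; apply: E_ext => s.
rewrite /Phi sumr_const card_ord -[_ *+ n.+1]mulr_natr mulrAC mulVf ?pnatr_eq0 // mul1r; ring.
Qed.

Lemma cnt_rcons k s x : cnt k (rcons s x) = (cnt k s + (x <= k))%N.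
Proof. by rewrite /cnt -cats1 count_cat /= addn0. Qed.

Lemma cnt_sum (R : realType) k s :
  \sum_(p < size s) ((nth 0%N s p <= k)%N)%:R = (cnt k s)%:R :> R.
Proof.
elim: s => [|x s IH]; first by rewrite big_ord0.
by rewrite big_ord_recl /= IH /cnt /= natrD.
Qed.



Lemma Phi_bound (R : realType) (r m : R) (h : nat -> R) k n s :
  0 <= r <= 1 -> inv_cfg n s -> (k <= n.+1)%N ->
  (forall y, y%:R * (h y.+1 - h y) <= m * h y) ->
  Phi r n (fun s => h (cnt k s)) s <= (1 + (1 - r) * m / n.+1%:R) * h (cnt k s).
Proof.
move=> /andP[r0 r1] Hs Hk Hh.
have Hsz : size s = n.+1 by case/andP: Hs => /eqP.
set y := cnt k s.
have Hterm : forall b : bool, h (y + b)%N = h y + (b%:R) * (h y.+1 - h y).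
  by case=> /=; rewrite ?addn1 ?addn0; ring.
have Hnew : (n.+2 <= k)%N = false by apply/negbTE; rewrite -ltnNge; apply: (leq_trans Hk).
rewrite /Phi.
under eq_bigr => p _ do rewrite !cnt_rcons Hnew Hterm addn0.
set a := (n.+1%:R)^-1 * (1 - r).
have -> : \sum_(p < n.+1) (n.+1%:R)^-1 * ((1 - r) * (h y + ((nth 0%N s p <= k)%N)%:R * (h y.+1 - h y)) + r * h y)
   = \sum_(p < n.+1) ((n.+1%:R)^-1 * h y + (a * (h y.+1 - h y)) * ((nth 0%N s p <= k)%N)%:R).
  by apply: eq_bigr => p _; rewrite /a; ring.
rewrite big_split /= sumr_const card_ord -mulr_sumr.
have := cnt_sum R k s; rewrite Hsz => ->.
rewrite -[_ *+ n.+1]mulr_natr mulrAC mulVf ?pnatr_eq0 // mul1r.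
have -> : (1 + (1 - r) * m / n.+1%:R) * h y = h y + a * (m * h y) by rewrite /a; ring.
rewrite lerD2l -mulrA; apply: ler_wpM2l; first by rewrite /a mulr_ge0 ?invr_ge0 ?ler0n ?subr_ge0.
by rewrite mulrC Hh.
Qed.



Lemma powR_expR (R : realType) (x b : R) : 0 < x -> powR x b = expR (b * ln x).
Proof. by move=> x0; rewrite /powR gt_eqF. Qed.

Lemma step_ln (R : realType) (M b : R) : 0 < M -> 0 <= b ->
  1 + b / (M + 1) <= powR ((M + 1) / M) b.
Proof.
move=> M0 b0.
have M1 : 0 < M + 1 by lra.
rewrite powR_expR ?divr_gt0 //.
apply: le_trans (expR_ge1Dx _); rewrite lerD2l; apply: ler_wpM2l => //.
have -> : (M + 1) / M = (1 + (- (M + 1)^-1))^-1.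
  by field; rewrite ?gt_eqF //; lra.
have Hi : (M + 1)^-1 < 1 by rewrite invf_lt1 //; lra.
have Hp : 0 < 1 + - (M + 1)^-1 by lra.
rewrite lnV ?posrE //.
have := @le_ln1Dx R (- (M + 1)^-1); rewrite ltrN2 => /(_ Hi); lra.
Qed.

Lemma expR_le (R : realType) (z : R) : expR z <= 1 + z * expR z.
Proof.
have H := expR_ge1Dx (- z).
have E : expR z * expR (- z) = 1 by rewrite expRxMexpNx_1.
have ez := expR_gt0 z.
nra.
Qed.

Lemma h_ok (R : realType) (m : R) : 1 <= m -> forall y : nat,
  y%:R * (powR (y.+1%:R + m) m - powR (y%:R + m) m) <= m * powR (y%:R + m) m.
Proof.
move=> m1 y.
set u := y%:R + m.
have y0 : 0 <= y%:R :> R by rewrite ler0n.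
have u0 : 0 < u by rewrite /u; lra.
have -> : y.+1%:R + m = u * (1 + u^-1) by rewrite /u -addn1 natrD; field; rewrite gt_eqF.
have ui : 0 <= u^-1 by rewrite invr_ge0 ltW.
rewrite powRM ?(ltW u0) //; last by lra.
set P := powR u m.
have P0 : 0 <= P by apply: powR_ge0.
set Z := expR (m * u^-1).
have HE : powR (1 + u^-1) m <= Z.
  rewrite powR_expR; last by lra.
  rewrite ler_expR; apply: ler_wpM2l; first by lra.
  by apply: le_ln1Dx; lra.
have HZ : y%:R * Z <= u.
  have H1 := expR_ge1Dx (- (m * u^-1)).
  have E : Z * expR (- (m * u^-1)) = 1 by rewrite expRxMexpNx_1.
  have Ey : y%:R = u * (1 + - (m * u^-1)) by rewrite /u; field; rewrite gt_eqF.
  have Z0 : 0 <= Z by apply: expR_ge0.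
  rewrite Ey.
  have : u * (1 + - (m * u^-1)) <= u * expR (- (m * u^-1)) by apply: ler_wpM2l; lra.
  move=> H2; nra.
have HyE : y%:R * powR (1 + u^-1) m <= u by apply: le_trans HZ; apply: ler_wpM2l.
set E := powR (1 + u^-1) m.
have H3 : 0 <= P * (u - y%:R * E) by apply: mulr_ge0 => //; rewrite subr_ge0.
have -> : m * P = y%:R * (P * E - P) + P * (u - y%:R * E) by rewrite /u; ring.
by rewrite lerDl.
Qed.




Lemma const_ok (R : realType) (m b : R) (k : nat) : 1 <= m -> 0 <= b -> (1 <= k)%N ->
  powR (1 + m / k%:R) m * (1 + b / k%:R)
    <= 1 + (m * m * expR (m * m) + b + m * m * expR (m * m) * b + 1) / k%:R.
Proof.
move=> m1 b0 k1.
have k0 : 0 < k%:R :> R by rewrite ltr0n.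
set t := k%:R^-1.
have t0 : 0 < t by rewrite invr_gt0.
have t1 : t <= 1 by rewrite invf_le1 // ler1n.
have m0 : 0 <= m by lra.
have mt0 : 0 <= m * t by apply: mulr_ge0; lra.
have mmt0 : 0 <= m * (m * t) by apply: mulr_ge0.
set A := m * m * expR (m * m).
have A0 : 0 <= A by rewrite /A mulr_ge0 ?expR_ge0 // mulr_ge0.
have HA : powR (1 + m * t) m <= 1 + A * t.
  rewrite powR_expR; last by lra.
  apply: (@le_trans _ _ (expR (m * (m * t)))).
    rewrite ler_expR; apply: ler_wpM2l => //.
    by apply: le_ln1Dx; lra.
  apply: le_trans (expR_le _) _.
  have : expR (m * (m * t)) <= expR (m * m).
    rewrite ler_expR; apply: ler_wpM2l => //.
    by rewrite -[X in _ <= X]mulr1; apply: ler_wpM2l.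
  move=> H.
  have -> : A * t = m * (m * t) * expR (m * m) by rewrite /A; ring.
  by rewrite lerD2l; apply: ler_wpM2l.
have bt0 : 0 <= b * t by apply: mulr_ge0; lra.
apply: (@le_trans _ _ ((1 + A * t) * (1 + b * t))).
  by apply: ler_wpM2r => //; lra.
have Ab : 0 <= A * b by apply: mulr_ge0.
have H1 : A * b * (t * t) <= A * b * t.
  by apply: ler_wpM2l => //; rewrite -[X in _ <= X]mulr1; apply: ler_wpM2l; lra.
have -> : 1 + (A + b + A * b + 1) * t
   = (1 + A * t) * (1 + b * t) + ((A * b * t - A * b * (t * t)) + t) by ring.
rewrite lerDl; apply: addr_ge0; last by lra.
by rewrite subr_ge0.
Qed.



Definition hh (R : realType) (m : R) (y : nat) : R := powR (y%:R + m) m.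

Lemma L0 (R : realType) (r m : R) k' : 0 <= r <= 1 ->
  yule_exp r k' (fun s => hh m (cnt k'.+1 s)) = hh m k'.+1.
Proof.
move=> hr; rewrite -(E_const r k' (hh m k'.+1)); apply: E_ext_inv => // s /andP[/eqP Hsz Ha].
have : count (fun t => (t <= k'.+1)%N) s == size s by rewrite -all_count.
by rewrite /cnt => /eqP ->; rewrite Hsz.
Qed.

Lemma L1 (R : realType) (r m : R) k n : 0 <= r <= 1 -> 1 <= m -> (k <= n.+1)%N ->
  yule_exp r n.+1 (fun s => hh m (cnt k s))
    <= (1 + (1 - r) * m / n.+1%:R) * yule_exp r n (fun s => hh m (cnt k s)).
Proof.
move=> hr m1 Hk; rewrite E_S -E_scale; apply: E_mono => // s Hs.
apply: (Phi_bound (h := hh m)) => // y; exact: h_ok.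
Qed.

Lemma S' (R : realType) (b : R) (M k : nat) : (1 <= M)%N -> (1 <= k)%N -> 0 <= b ->
  (1 + b / M.+1%:R) * powR (M%:R / k%:R) b <= powR (M.+1%:R / k%:R) b.
Proof.
move=> M1 k1 b0.
have M0 : 0 < M%:R :> R by rewrite ltr0n.
have k0 : 0 < k%:R :> R by rewrite ltr0n.
have EM : M.+1%:R = M%:R + 1 :> R by rewrite -addn1 natrD.
have -> : M.+1%:R / k%:R = ((M%:R + 1) / M%:R) * (M%:R / k%:R) :> R.
  by rewrite EM; field; rewrite !gt_eqF.
rewrite [X in _ <= X]powRM; last 2 first.
- by apply: divr_ge0; lra.
- by apply: divr_ge0; lra.
apply: ler_wpM2r; first exact: powR_ge0.
by rewrite EM; apply: step_ln.
Qed.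

Lemma G (R : realType) (r m : R) k' j : 0 <= r <= 1 -> 1 <= m ->
  yule_exp r (k' + j).+1 (fun s => hh m (cnt k'.+1 s))
   <= hh m k'.+1 * (1 + (1 - r) * m / k'.+1%:R) * powR ((k'.+1 + j)%:R / k'.+1%:R) ((1 - r) * m).
Proof.
move=> hr m1.
have b0 : 0 <= (1 - r) * m by apply: mulr_ge0; case/andP: hr => ? ?; lra.
have h0 : 0 <= hh m k'.+1 by apply: powR_ge0.
elim: j => [|j IH].
  rewrite !addn0 divff ?pnatr_eq0 // powR1 mulr1.
  apply: le_trans (L1 hr m1 (leqnn _)) _.
  by rewrite L0 // mulrC.
rewrite addnS; apply: le_trans (L1 hr m1 _) _; first by lia.
have Hc : 0 <= 1 + (1 - r) * m / (k' + j).+2%:R.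
  by apply: addr_ge0 => //; apply: divr_ge0 => //; rewrite ler0n.
apply: le_trans (ler_wpM2l Hc IH) _.
rewrite mulrCA; apply: ler_wpM2l.
  by apply: mulr_ge0 => //; apply: addr_ge0 => //; apply: divr_ge0 => //; rewrite ler0n.
have -> : (k' + j).+2 = (k'.+1 + j).+1 by rewrite addSn.
by rewrite addnS; apply: S'.
Qed.

Lemma Fbound (R : realType) (r m : R) (N k : nat) : 0 <= r <= 1 -> 1 <= m ->
  (1 <= k <= N)%N ->
  yule_exp r N.-1 (fun s => hh m (cnt k s))
   <= hh m k * (1 + (1 - r) * m / k%:R) * powR (N%:R / k%:R) ((1 - r) * m).
Proof.
move=> hr m1 /andP[k1 kN].
have b0 : 0 <= (1 - r) * m by apply: mulr_ge0; case/andP: hr => ? ?; lra.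
case: k k1 kN => [//|k'] _ kN.
have h0 : 0 <= hh m k'.+1 by apply: powR_ge0.
have c0 : 0 <= hh m k'.+1 * (1 + (1 - r) * m / k'.+1%:R).
  by apply: mulr_ge0 => //; apply: addr_ge0 => //; apply: divr_ge0 => //; rewrite ler0n.
move: kN; rewrite leq_eqVlt => /orP[/eqP <-|].
  rewrite /= L0 // divff ?pnatr_eq0 // powR1 mulr1.
  rewrite -[X in X <= _]mulr1; apply: ler_wpM2l => //.
  by rewrite lerDl; apply: divr_ge0 => //; rewrite ler0n.
move/subnKC => <-.
set j := (N - k'.+2)%N.
have -> : (k'.+2 + j).-1 = (k' + j).+1 by rewrite addSn.
apply: le_trans (@G _ r m k' j hr m1) _; apply: ler_wpM2l => //.
apply: ge0_ler_powR => //; rewrite ?nnegrE.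
- by apply: divr_ge0; rewrite ler0n.
- by apply: divr_ge0; rewrite ler0n.
apply: ler_wpM2r; first by rewrite invr_ge0 ler0n.
by rewrite ler_nat; lia.
Qed.



Theorem lemma4p2 (R : realType) (r m : R) :
  0 < r < 1 -> 1 <= m ->
  exists C : R, 0 < C /\
    forall N k : nat, (1 <= N)%N -> (1 <= k <= N)%N ->
      EXm r m k N <= powR (k%:R / N%:R) (m * r) * (1 + C / k%:R).
Proof.
move=> /andP[r0 r1] m1.
have hr : 0 <= r <= 1 by apply/andP; split; lra.
have m0 : 0 <= m by lra.
set b := (1 - r) * m.
have b0 : 0 <= b by rewrite /b mulr_ge0 //; lra.
have eA : 0 <= m * m * expR (m * m) by rewrite mulr_ge0 ?expR_ge0 // mulr_ge0.
exists (m * m * expR (m * m) + b + m * m * expR (m * m) * b + 1); split.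
  have : 0 <= m * m * expR (m * m) * b by apply: mulr_ge0.
  lra.
move=> N k N1 /andP[k1 kN].
have N0 : 0 < N%:R :> R by rewrite ltr0n.
have k0 : 0 < k%:R :> R by rewrite ltr0n.
rewrite /EXm.
have step1 : yule_exp r N.-1 (fun s => powR (frac_types R k s) m)
   <= yule_exp r N.-1 (fun s => powR (N%:R^-1) m * hh m (cnt k s)).
  apply: E_mono => // s /andP[/eqP Hsz _].
  rewrite /frac_types Hsz prednK // -/(cnt k s) /hh mulrC -powRM; last 2 first.
  - by rewrite invr_ge0 ler0n.
  - by rewrite addr_ge0 // ler0n.
  apply: ge0_ler_powR => //; rewrite ?nnegrE.
  - by apply: mulr_ge0; rewrite ?invr_ge0 ?ler0n.
  - by apply: mulr_ge0; rewrite ?invr_ge0 ?addr_ge0 ?ler0n.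
  by apply: ler_wpM2l; rewrite ?invr_ge0 ?ler0n // lerDl.
apply: le_trans step1 _; rewrite E_scale.
have kk : (1 <= k <= N)%N by rewrite k1 kN.
apply: le_trans (ler_wpM2l (powR_ge0 _ _) (@Fbound _ r m N k hr m1 kk)) _.
set x := k%:R / N%:R.
have x0 : 0 < x by rewrite divr_gt0.
have e1 : hh m k = powR k%:R m * powR (1 + m / k%:R) m.
  rewrite /hh -powRM; last 2 first.
  - by rewrite ler0n.
  - by apply: addr_ge0 => //; apply: divr_ge0; rewrite ?ler0n.
  by congr powR; field; rewrite gt_eqF.
have e2 : powR (N%:R / k%:R) b = (powR x b)^-1.
  apply: (@mulIf _ (powR x b)); first by rewrite gt_eqF // powR_gt0.
  rewrite mulVf ?gt_eqF ?powR_gt0 // -powRM; last 2 first.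
  - by apply: divr_ge0; rewrite ler0n.
  - exact: ltW.
  have -> : N%:R / k%:R * x = 1 by rewrite /x; field; rewrite !gt_eqF.
  by rewrite powR1.
have e3 : powR x (m * r) = powR x m / powR x b.
  have -> : m * r = m - b by rewrite /b; ring.
  by rewrite powRB //; apply/implyP => _; rewrite gt_eqF.
have e4 : powR x m = powR k%:R m * powR (N%:R^-1) m.
  by rewrite /x powRM // ?invr_ge0 ler0n.
have Hc := @const_ok R m b k m1 b0 k1.
have -> : powR N%:R^-1 m * (hh m k * (1 + (1 - r) * m / k%:R) * powR (N%:R / k%:R) ((1 - r) * m))
  = powR x (m * r) * (powR (1 + m / k%:R) m * (1 + b / k%:R)).
  by rewrite -/b e1 e2 e3 e4; ring.
by apply: ler_wpM2l => //; apply: powR_ge0.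
Qed.
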